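(* A connected subcubic graph $G$ satisfies $2\alpha(G)=\mathrm{diss}(G)$ if and only if $G\in\mathcal{G}$.
   Context: All graphs are finite, simple and undirected; subcubic means maximum degree at most $3$. $\alpha(G)$ is the independence number. A set $D$ of vertices is a dissociation set if $G[D]$ has maximum degree at most $1$, and $\mathrm{diss}(G)$ is the maximum order of a dissociation set. Let $K_4^*$ be the graph obtained from $K_4$ with vertices $a,b,c,d$ by subdividing the edge $ab$ twice (i.e. replacing $ab$ by a path $a\,x\,y\,b$ with two new vertices $x,y$). The class $\mathcal{G}$ consists of $K_4$ together with all connected subcubic graphs obtained as follows: take the disjoint union of (at least one, finitely many) copies of the following three marked graphs: (1) $K_2$ with both vertices marked; (2) $K_3$ with exactly two of its three vertices marked; (3) $K_4^*$ with the two subdivision vertices $x,y$ and the vertices $c,d$ marked (so $a,b$ are unmarked); then add additional edges between vertices of the union, each added edge being incident with at most one marked vertex, such that the resulting graph is simple, connected and subcubic. *)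

(* Defs.v *)
From mathcomp Require Import all_boot.
Set Implicit Arguments. Unset Strict Implicit. Unset Printing Implicit Defensive.

Section Graphs.
Variable T : finType.
Implicit Types (e h : rel T) (S M C : {set T}).

Definition simple_graph e := symmetric e /\ irreflexive e.

Definition connected_graph e := 0 < #|T| /\ forall x y : T, connect e x y.

Definition subcubic e := forall x : T, #|[set y | e x y]| <= 3.

Definition independent e S := [forall x in S, forall y in S, ~~ e x y].

Definition dissociation e S := [forall x in S, #|[set y in S | e x y]| <= 1].

Definition alpha e : nat := \max_(S : {set T} | independent e S) #|S|.
Definition diss e : nat := \max_(S : {set T} | dissociation e S) #|S|.

Definition marked_copy n (adj : rel 'I_n) (mk : pred 'I_n) h M C :=
  exists phi : 'I_n -> T,
    [/\ injective phi, C = phi @: [set: 'I_n],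
        forall i j, h (phi i) (phi j) = adj i j
      & forall i, (phi i \in M) = mk i].

End Graphs.

Definition K2_adj : rel 'I_2 := fun i j => i != j.
Definition K2_mark : pred 'I_2 := fun _ => true.
Definition K3_adj : rel 'I_3 := fun i j => i != j.
Definition K3_mark : pred 'I_3 := fun i => val i != 2.
(* K4^*: a=0, b=1, c=2, d=3, x=4, y=5; edges ac ad bc bd cd ax xy yb;
   marked: c d x y *)
Definition K4s_edges : seq (nat * nat) :=
  [:: (0,2); (0,3); (1,2); (1,3); (2,3); (0,4); (4,5); (5,1)].
Definition K4s_adj : rel 'I_6 := fun i j =>
  ((val i, val j) \in K4s_edges) || ((val j, val i) \in K4s_edges).
Definition K4s_mark : pred 'I_6 := fun i => 2 <= val i.

Definition isK4 (T : finType) (e : rel T) :=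
  exists phi : 'I_4 -> T, bijective phi /\ forall i j, e (phi i) (phi j) = (i != j).

(* G is obtained from a disjoint union H (spanning subgraph h of e) of marked
   copies by adding edges (those of e not in h) each incident with at most one
   marked vertex. *)
Definition built_from_copies (T : finType) (e : rel T) :=
  exists (h : rel T) (M : {set T}),
    [/\ symmetric h,
        forall x y, h x y -> e x y,
        forall x : T, let C := [set y | connect h x y] in
          [\/ marked_copy K2_adj K2_mark h M C,
              marked_copy K3_adj K3_mark h M C
            | marked_copy K4s_adj K4s_mark h M C]
      & forall x y, e x y -> ~~ h x y -> ~~ ((x \in M) && (y \in M))].

Definition classG (T : finType) (e : rel T) := isK4 e \/ built_from_copies e.

(* Main.v *)
Require Import Defs.
From mathcomp Require Import all_boot.

Lemma K4s_sym : symmetric K4s_adj.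
Proof. by move=> i j; rewrite /K4s_adj orbC. Qed.

Lemma conn_K4s (i j : 'I_6) : connect K4s_adj i j.
Proof.
have H0 : forall k : 'I_6, connect K4s_adj ord0 k.
  have c04 : connect K4s_adj ord0 (@Ordinal 6 4 isT) by apply: connect1.
  have c02 : connect K4s_adj ord0 (@Ordinal 6 2 isT) by apply: connect1.
  case=> [[|[|[|[|[|[|k]]]]]] Hk] //.
  - by rewrite (_ : Ordinal Hk = ord0) //; apply: val_inj.
  - by apply: connect_trans c02 _; apply: connect1.
  - by apply: connect1.
  - by apply: connect1.
  - by apply: connect1.
  - by apply: connect_trans c04 _; apply: connect1.
apply: connect_trans (H0 j); rewrite (sym_connect_sym K4s_sym); exact: H0.
Qed.

Lemma t2 (i j k : 'I_6) : i != j -> j != k -> i != k -> K4s_adj i j || K4s_adj j k || K4s_adj i k.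
Proof.
case: i => [[|[|[|[|[|[|i]]]]]] Hi] //; case: j => [[|[|[|[|[|[|j]]]]]] Hj] //; case: k => [[|[|[|[|[|[|k]]]]]] Hk] //.
Qed.

Lemma t3 (i j k : 'I_6) : K4s_mark i -> K4s_adj i j -> K4s_mark j -> K4s_adj i k -> K4s_mark k -> j = k.
Proof.
case: i => [[|[|[|[|[|[|i]]]]]] Hi] //; case: j => [[|[|[|[|[|[|j]]]]]] Hj] //; case: k => [[|[|[|[|[|[|k]]]]]] Hk] //; by move=> *; apply: val_inj.
Qed.

Lemma f2 (i j k : 'I_2) : K2_mark i -> K2_adj i j -> K2_mark j -> K2_adj i k -> K2_mark k -> j = k.
Proof. by case: i => [[|[|i]] Hi] //; case: j => [[|[|j]] Hj] //; case: k => [[|[|k]] Hk] //; move=> *; apply: val_inj. Qed.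

Lemma f3 (i j k : 'I_3) : K3_mark i -> K3_adj i j -> K3_mark j -> K3_adj i k -> K3_mark k -> j = k.
Proof. by case: i => [[|[|[|i]]] Hi] //; case: j => [[|[|[|j]]] Hj] //; case: k => [[|[|[|k]]] Hk] //; move=> *; apply: val_inj. Qed.

Lemma conn_K3 (i j : 'I_3) : connect K3_adj i j.
Proof. by case: (eqVneq i j) => [->|ij]; [exact: connect0 | apply: connect1]. Qed.

Lemma conn_K2 (i j : 'I_2) : connect K2_adj i j.
Proof. by case: (eqVneq i j) => [->|ij]; [exact: connect0 | apply: connect1]. Qed.

From mathcomp Require Import all_boot zify.
Set Implicit Arguments. Unset Strict Implicit. Unset Printing Implicit Defensive.

Section Main.
Variable T : finType.
Variable e : rel T.
Hypothesis esy : symmetric e.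
Hypothesis eirr : irreflexive e.
Hypothesis ecub : subcubic e.

Lemma indepP (S : {set T}) : reflect (forall x y, x \in S -> y \in S -> ~~ e x y) (independent e S).
Proof.
apply: (iffP forall_inP) => [H x y xS yS | H x xS]; first by move/forall_inP: (H x xS); apply.
by apply/forall_inP => y yS; apply: H.
Qed.

Lemma dissP (S : {set T}) : dissociation e S -> forall x y z, x \in S -> y \in S -> z \in S -> e x y -> e x z -> y = z.
Proof.
move=> /forall_inP H x y z xS yS zS exy exz.
have /card_le1_eqP := H x xS; apply; by rewrite inE ?yS ?zS.
Qed.

Lemma alpha_ge (S : {set T}) : independent e S -> #|S| <= alpha e.
Proof. by move=> H; apply: (leq_bigmax_cond S). Qed.

Lemma diss_ge (S : {set T}) : dissociation e S -> #|S| <= diss e.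
Proof. by move=> H; apply: (leq_bigmax_cond S). Qed.

Lemma diss_attained : exists2 D, dissociation e D & #|D| = diss e.
Proof.
have : #|[pred S : {set T} | dissociation e S]| > 0.
  apply/card_gt0P; exists set0; rewrite inE; apply/forall_inP => x; by rewrite inE.
by case/(eq_bigmax_cond (fun S : {set T} => #|S|)) => S; rewrite inE => HS Hm; exists S => //; symmetry; exact: Hm.
Qed.

Lemma alpha_attained : exists2 I, independent e I & #|I| = alpha e.
Proof.
have : #|[pred S : {set T} | independent e S]| > 0.
  apply/card_gt0P; exists set0; rewrite inE; apply/forall_inP => x; by rewrite inE.
by case/(eq_bigmax_cond (fun S : {set T} => #|S|)) => S; rewrite inE => HS Hm; exists S => //; symmetry; exact: Hm.
Qed.

Lemma deg4 v a b c d : e v a -> e v b -> e v c -> e v d ->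
  uniq [:: a; b; c; d] -> False.
Proof.
move=> ea eb ec ed U.
have : #|[:: a; b; c; d]| <= #|[set y | e v y]|.
  apply: subset_leq_card; apply/subsetP => z; rewrite !inE.
  by case/or4P => /eqP->.
by rewrite (card_uniqP U) => /leq_trans/(_ (ecub v)).
Qed.

Lemma nb3 v a b c z : e v a -> e v b -> e v c -> uniq [:: a; b; c] -> e v z ->
  [|| z == a, z == b | z == c].
Proof.
move=> ea eb ec U ez; apply/negPn/negP => H.
apply: (deg4 ea eb ec ez).
move: U H; rewrite /= !inE !negb_or => /andP[/andP[-> ->] /andP[-> _]] /and3P[za zb zc].
by rewrite !(eq_sym _ z) za zb zc.
Qed.


Lemma codom_nth (n : nat) (s : seq T) z0 z : size s = n -> z \in s ->
  z \in codom (fun i : 'I_n => nth z0 s i).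
Proof.
move=> hs zs; apply/codomP.
have lt : index z s < n by rewrite -hs index_mem.
by exists (Ordinal lt); rewrite /= nth_index.
Qed.

Lemma inj_nth n (s : seq T) z0 : size s = n -> uniq s -> injective (fun i : 'I_n => nth z0 s i).
Proof.
move=> hs us i j /eqP; rewrite nth_uniq ?hs ?ltn_ord // => /eqP; apply: val_inj.
Qed.

Lemma conn_map (h : rel T) n (adj : rel 'I_n) (phi : 'I_n -> T) :
  (forall i j, adj i j -> h (phi i) (phi j)) ->
  forall i j, connect adj i j -> connect h (phi i) (phi j).
Proof.
move=> H i j /connectP[q]; elim: q i => [|k q IH] i /=; first by move=> _ ->.
by case/andP => aik pq eq; apply: connect_trans (connect1 (H _ _ aik)) (IH _ pq eq).
Qed.

Lemma block_copy (h : rel T) (key : T -> {set T}) (D : {set T}) n (adj : rel 'I_n) (mk : pred 'I_n)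
  (phi : 'I_n -> T) (Kset : {set T}) :
  (forall x y, h x y = e x y && (key x == key y)) ->
  injective phi -> (forall i, key (phi i) = Kset) -> (forall z, key z = Kset -> z \in codom phi) ->
  (forall i j, e (phi i) (phi j) = adj i j) -> (forall i, (phi i \in D) = mk i) ->
  (forall i j, connect adj i j) ->
  forall x, x \in codom phi -> marked_copy adj mk h D [set y | connect h x y].
Proof.
move=> hdef inj hk hinv he hm hc x /codomP[i ->]; exists phi; split => //.
- apply/setP => y; rewrite inE; apply/idP/idP.
  + move=> cy.
    have cl : closed h [pred z | key z == Kset].
      by move=> u v; rewrite hdef => /andP[_ /eqP kuv]; rewrite !inE kuv.
    have := closed_connect cl cy; rewrite !inE hk eqxx => /esym /eqP /hinv /codomP[j ->].
    by apply/imsetP; exists j.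
  + case/imsetP => j _ ->; apply: conn_map (hc i j) => i' j' aij.
    by rewrite hdef he aij !hk eqxx.
- by move=> i' j'; rewrite hdef he !hk eqxx andbT.
Qed.

Section Dsec.
Variable D : {set T}.
Hypothesis hD : dissociation e D.

Definition p u := odflt u [pick v in D | e u v].

Lemma pP u : u \in D -> p u = u \/ [/\ p u \in D, e u (p u), p u != u & p (p u) = u].
Proof.
move=> uD; rewrite /p; case: pickP => [v /andP[vD euv] | none] /=; last by left.
right; have vu : v != u by apply: contraTneq euv => ->; rewrite eirr.
split => //; case: pickP => [w /andP[wD evw] | none] /=.
  by apply: (dissP hD vD wD uD evw); rewrite esy.
by move: (none u); rewrite uD esy euv.
Qed.

Lemma p_eq u v : u \in D -> v \in D -> e u v -> p u = v.
Proof.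
move=> uD vD euv; rewrite /p; case: pickP => [w /andP[wD euw] | none] /=.
  exact: (dissP hD uD wD vD euw euv).
by move: (none v); rewrite vD euv.
Qed.

Lemma pD u : u \in D -> p u \in D.
Proof. by move=> uD; case: (pP uD) => [->|[]]. Qed.

Definition NX (X : {set T}) u := [exists x in X, e x u].

Lemma keylemma (X Z : {set T}) :
  independent e X -> [disjoint X & D] -> Z \subset D -> (forall u, u \in Z -> p u \in Z) ->
  (forall u, u \in D -> u \notin Z -> NX X u -> NX X (p u) -> False) ->
  2 * #|X| + #|D| + [exists u in D :\: Z, p u == u] <= #|Z| + 2 * alpha e.
Proof.
move=> iX dXD sZD cZ H.
pose S := [set u in D | [&& u \notin Z, ~~ NX X u &
   [|| NX X (p u), p u == u | (enum_rank u < enum_rank (p u))%N]]].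
have SD : S \subset D by apply/subsetP => u; rewrite inE => /andP[].
have iXS : independent e (X :|: S).
  apply/indepP => x y; rewrite !inE => /orP[xX|xS] /orP[yX|yS].
  - by move/indepP: iX; apply.
  - move: yS => /andP[_ /and3P[_ /existsPn /(_ x)]]; by rewrite xX.
  - move: xS => /andP[_ /and3P[_ /existsPn /(_ y)]]; rewrite yX /= => H1 _.
    by apply: contra H1; rewrite esy.
  - apply/negP => exy.
    move: xS yS => /andP[xD /and3P[_ nx cx]] /andP[yD /and3P[_ ny cy]].
    have pxy := p_eq xD yD exy.
    have pyx : p y = x by apply: p_eq => //; rewrite esy.
    have xy : x != y by apply: contraTneq exy => ->; rewrite eirr.
    move: cx cy; rewrite pxy pyx (negbTE ny) (negbTE nx) /= (negbTE xy) eq_sym (negbTE xy) /=.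
    by move=> h1 h2; lia.
have cXS : #|X :|: S| = #|X| + #|S|.
  rewrite cardsU; suff -> : X :&: S = set0 by rewrite cards0 subn0.
  apply/setP => x; rewrite !inE; apply/negP => /andP[xX /andP[xD _]].
  by move: dXD => /disjoint_setI0 /setP /(_ x); rewrite !inE xX xD.
have aXS := alpha_ge iXS.
have cover : D :\: Z \subset S :|: p @: S.
  apply/subsetP => u; rewrite in_setD in_setU => /andP[uZ uD].
  case: (pP uD) => [pu | [puD eupu pun ppu]].
    apply/orP; left; rewrite inE uD uZ pu eqxx !orbT andbT /=.
    by apply/negP => nu; apply: (H u) => //; rewrite pu.
  have puZ : p u \notin Z by apply: contra uZ => /cZ; rewrite ppu.
  have pS : [&& u \notin Z, ~~ NX X u & NX X (p u)] -> u \in S.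
    by move=> /and3P[a b c]; rewrite inE uD a b c.
  have qS : [&& p u \notin Z, ~~ NX X (p u) & NX X u] -> u \in p @: S.
    move=> /and3P[a b c]; apply/imsetP; exists (p u) => //.
    by rewrite inE puD a b ppu c.
  case nu : (NX X u).
    case npu : (NX X (p u)); first by case: (H u uD uZ).
    by apply/orP; right; apply: qS; rewrite puZ npu.
  case npu : (NX X (p u)); first by apply/orP; left; apply: pS; rewrite uZ nu npu.
  have ranks : enum_rank u != enum_rank (p u).
    by apply: contra pun => /eqP/enum_rank_inj h; rewrite -h eqxx.
  case: (ltngtP (enum_rank u) (enum_rank (p u))) => [lt | gt | eq].
  - by apply/orP; left; rewrite inE uD uZ nu lt !orbT.
  - apply/orP; right; apply/imsetP; exists (p u) => //.
    by rewrite inE puD puZ npu ppu gt !orbT.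
  - by move/eqP: ranks; case; apply: val_inj.
have cD : #|D :\: Z| = #|D| - #|Z|.
  by rewrite cardsD (setIidPr sZD).
have cZD : #|Z| <= #|D| by apply: subset_leq_card.
have cU := subset_leq_card cover.
have cpS : #|p @: S| <= #|S| := leq_imset_card _ _.
move: cU; rewrite cardsU => cU.
have iso : [exists u in D :\: Z, p u == u] -> 0 < #|S :&: p @: S|.
  case/existsP => u; rewrite !inE => /andP[/andP[uZ uD] /eqP pu].
  apply/card_gt0P; exists u; rewrite in_setI.
  have uS : u \in S.
    rewrite inE uD uZ pu eqxx !orbT andbT /=.
    by apply/negP => nu; apply: (H u) => //; rewrite pu.
  rewrite uS /=; apply/imsetP; exists u => //.
case: [exists u in D :\: Z, p u == u] iso => /= iso.
  have cd : #|S :&: p @: S| <= #|p @: S| by apply: subset_leq_card; apply: subsetIr.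
  clearbody S; have := iso isT; lia.
have cd : #|S :&: p @: S| <= #|p @: S| by apply: subset_leq_card; apply: subsetIr.
clearbody S; lia.
Qed.


Hypothesis hDsz : 2 * alpha e <= #|D|.

Lemma perfect u : u \in D -> [/\ p u \in D, e u (p u), p u != u & p (p u) = u].
Proof.
move=> uD; case: (pP uD) => // pu.
have := @keylemma set0 set0.
rewrite !cards0.
have -> : [exists u0 in D :\: set0, p u0 == u0].
  by apply/existsP; exists u; rewrite !inE uD pu eqxx.
move=> /(_ _ _ _ _ _) H; have {H} : 2 * 0 + #|D| + 1 <= 0 + 2 * alpha e.
  apply: H.
  - by apply/indepP => x y; rewrite inE.
  - by rewrite -setI_eq0 set0I.
  - exact: sub0set.
  - by move=> v; rewrite inE.
  - by move=> v _ _ /existsP[x]; rewrite inE.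
lia.
Qed.

Lemma ppK u : u \in D -> p (p u) = u.
Proof. by case/perfect. Qed.
Lemma e_p u : u \in D -> e u (p u).
Proof. by case/perfect. Qed.
Lemma pneq u : u \in D -> p u != u.
Proof. by case/perfect. Qed.

Lemma keyseq (sx sz : seq T) : uniq sx -> all (fun x => x \notin D) sx ->
  (forall x y, x \in sx -> y \in sx -> ~~ e x y) -> all (mem D) sz ->
  (forall u, u \in sz -> p u \in sz) -> size sz < 2 * size sx ->
  exists u, [/\ u \in D, u \notin sz, has (fun x => e x u) sx & has (fun x => e x (p u)) sx].
Proof.
move=> usx nD ind zD cz lt.
case: (boolP [exists u, [&& u \in D, u \notin sz, has (fun x => e x u) sx & has (fun x => e x (p u)) sx]]).
  by case/existsP => u /and4P[? ? ? ?]; exists u.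
move/existsPn => none.
have := @keylemma [set x in sx] [set z in sz].
move=> /(_ _ _ _ _ _) H; have {H} : 2 * #|[set x in sx]| + #|D| + 0 <= #|[set z in sz]| + 2 * alpha e.
  apply: leq_trans (H _ _ _ _ _); first by rewrite leq_add2l leq0n.
  - by apply/indepP => x y; rewrite !inE; apply: ind.
  - rewrite -setI_eq0; apply/eqP/setP => x; rewrite !inE; apply/negP => /andP[xs xD].
    by move/allP: nD => /(_ x xs); rewrite xD.
  - by apply/subsetP => z; rewrite inE => zs; move/allP: zD => /(_ z zs).
  - by move=> u; rewrite !inE; apply: cz.
  - move=> u uD; rewrite inE => uz /existsP[x]; rewrite inE => /andP[xs exu] /existsP[y].
    rewrite inE => /andP[ys eypu]; move: (none u); rewrite uD uz /=.
    by rewrite negb_and; case/orP => /hasPn HH; [move: (HH x xs) | move: (HH y ys)]; rewrite ?exu ?eypu.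
move=> h; exfalso.
have hz : #|[set z in sz]| <= size sz by rewrite cardsE; apply: card_size.
have hx : #|[set x in sx]| = size sx by rewrite cardsE; apply/card_uniqP.
lia.
Qed.

Lemma apex_ex w : w \notin D -> exists u, [/\ u \in D, e w u & e w (p u)].
Proof.
move=> wD; have [] := @keyseq [:: w] [::] => //=; first by rewrite wD.
  by move=> x y; rewrite !inE => /eqP-> /eqP->; rewrite eirr.
by move=> u [uD _]; rewrite !orbF => a b; exists u.
Qed.

Lemma allnb_false (sx sz : seq T) : uniq sx -> all (fun x => x \notin D) sx ->
  all (mem D) sz -> (forall u, u \in sz -> p u \in sz) -> size sz < 2 * size sx ->
  (forall x z, x \in sx -> e x z -> z \in sz) -> False.
Proof.
move=> usx nD zD cz lt nb.
have [] := @keyseq sx sz usx nD _ zD cz lt.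
  move=> x y xs ys; apply/negP => exy; have := nb x y xs exy.
  move/allP: zD => H /H; move/allP: nD => /(_ y ys) /negbTE; by rewrite /mem /= => ->.
move=> u [uD uz /hasP[x xs exu] _]; by move: uz; rewrite (nb x u xs exu).
Qed.


Ltac dis := rewrite /= ?inE ?negb_or ?andbT; repeat (apply/andP; split); try solve [done | by rewrite eq_sym].

Lemma neqD a u : a \notin D -> u \in D -> a != u.
Proof. by move=> aD uD; apply: contraNneq aD => ->. Qed.

Lemma p_neq2 u v : u \in D -> v \in D -> v != u -> p v != p u.
Proof. by move=> uD vD; apply: contra => /eqP h; rewrite -(ppK vD) h ppK. Qed.

Lemma p_neq1 u v : u \in D -> v \in D -> v != p u -> p v != u.
Proof. by move=> uD vD; apply: contra => /eqP h; rewrite -h ppK. Qed.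

Lemma TS a b u : a \notin D -> b \notin D -> a != b -> ~~ e a b -> u \in D ->
  e a u -> e a (p u) -> e b u -> e b (p u) ->
  exists x, [/\ x \in D, e a x, e b (p x), x != u & x != p u].
Proof.
move=> aD bD ab nab uD eau eapu ebu ebpu.
have puD := pD uD.
have [] := @keyseq [:: a; b] [:: u; p u].
- by rewrite /= inE ab.
- by rewrite /= aD bD.
- move=> x y; rewrite !inE => /orP[/eqP->|/eqP->] /orP[/eqP->|/eqP->];
  by rewrite ?eirr // esy.
- by rewrite /= uD puD.
- by move=> w; rewrite !inE => /orP[/eqP->|/eqP->]; rewrite ?ppK ?eqxx ?orbT.
- by [].
move=> v [vD]; rewrite !inE negb_or => /andP[vu vpu] /=; rewrite !orbF => hv hpv.
have pvD := pD vD.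
have pvu := p_neq1 uD vD vpu.
have pvpu := p_neq2 uD vD vu.
have vpv := pneq vD.
have U : uniq [:: u; p u; v; p v].
  have := pneq uD; move=> upu; dis.
case/orP: hv => hv; case/orP: hpv => hpv.
- by case: (deg4 eau eapu hv hpv U).
- by exists v.
- by exists (p v); rewrite ppK // esy in hpv *; split => //; rewrite esy.
- by case: (deg4 ebu ebpu hv hpv U).
Qed.

Record K4S (a b c d x y : T) : Prop := {
  k_a : a \notin D; k_b : b \notin D; k_c : c \in D; k_x : x \in D; k_ab : ~~ e a b;
  k_pc : p c = d; k_px : p x = y; k_anb : a != b; k_xc : x != c; k_xd : x != d;
  k_ac : e a c; k_ad : e a d; k_bc : e b c; k_bd : e b d; k_ax : e a x; k_by : e b y }.


Section K4Sfacts.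
Variables a b c d x y : T.
Hypothesis K : K4S a b c d x y.

Lemma K_dD : d \in D. Proof. by rewrite -(k_pc K) pD // (k_c K). Qed.
Lemma K_yD : y \in D. Proof. by rewrite -(k_px K) pD // (k_x K). Qed.
Lemma K_pd : p d = c. Proof. by rewrite -(k_pc K) ppK // (k_c K). Qed.
Lemma K_py : p y = x. Proof. by rewrite -(k_px K) ppK // (k_x K). Qed.
Lemma K_cd : c != d. Proof. by rewrite -(k_pc K) eq_sym pneq // (k_c K). Qed.
Lemma K_xy : x != y. Proof. by rewrite -(k_px K) eq_sym pneq // (k_x K). Qed.
Lemma K_yc : y != c.
Proof. rewrite -(k_px K); apply: p_neq1; rewrite ?(k_c K) ?(k_x K) ?(k_pc K) //; exact: (k_xd K). Qed.
Lemma K_yd : y != d.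
Proof. rewrite -(k_px K) -(k_pc K); apply: p_neq2; rewrite ?(k_c K) ?(k_x K) //; exact: (k_xc K). Qed.

Lemma K_na z : e a z -> [|| z == c, z == d | z == x].
Proof.
apply: nb3; rewrite ?(k_ac K) ?(k_ad K) ?(k_ax K) //.
have := K_cd; have := k_xc K; have := k_xd K; move=> *; dis.
Qed.

Lemma K_nc z : e c z -> [|| z == d, z == a | z == b].
Proof.
move=> ecz; have ecd : e c d by rewrite -(k_pc K) e_p // (k_c K).
apply: (nb3 ecd _ _ _ ecz); rewrite ?(esy c) ?(k_ac K) ?(k_bc K) //.
have := neqD (k_a K) K_dD; have := neqD (k_b K) K_dD; have := k_anb K; move=> *; dis.
Qed.

Lemma K_nay : ~~ e a y.
Proof.
apply/negP => /K_na; have := K_yc; have := K_yd; have := K_xy.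
by rewrite !(eq_sym y) => /negbTE-> /negbTE-> /negbTE->.
Qed.

Lemma K_ncx : ~~ e c x.
Proof.
apply/negP => /K_nc; have := neqD (k_a K) (k_x K); have := neqD (k_b K) (k_x K); have := k_xd K.
by rewrite !(eq_sym x) => /negbTE-> /negbTE-> /negbTE->.
Qed.

Lemma K_ncy : ~~ e c y.
Proof.
apply/negP => /K_nc; have := neqD (k_a K) K_yD; have := neqD (k_b K) K_yD; have := K_yd.
by rewrite !(eq_sym y) => /negbTE-> /negbTE-> /negbTE->.
Qed.

Lemma K_swab : K4S b a c d y x.
Proof.
case: K => *; split => //; rewrite ?K_yD ?K_py ?K_yc ?K_yd //; by rewrite ?(esy b a) // eq_sym.
Qed.

Lemma K_swcd : K4S a b d c x y.
Proof.
case: K => *; split => //; rewrite ?K_dD ?K_pd //; by rewrite ?(esy b a) // eq_sym.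
Qed.

End K4Sfacts.


Definition twin a := (a \notin D) && [exists b, [&& b \notin D, b != a &
   [exists u, [&& u \in D, e a u, e a (p u), e b u & e b (p u)]]]].
Definition claims a v := [&& twin a, e a v, v \in D & ~~ e a (p v)].
Definition A w := [set u in D | e w u && e w (p u)].
Definition key v := if v \in D then (if [pick a | claims a v] is Some a then A a else [set v; p v]) else A v.

Lemma K_claims a b c d x y : K4S a b c d x y -> claims a x.
Proof.
move=> K; rewrite /claims (k_ax K) (k_x K) (k_px K) (K_nay K) /= andbT.
rewrite /twin (k_a K) /=; apply/existsP; exists b; rewrite (k_b K) eq_sym (k_anb K) /=.
apply/existsP; exists c; by rewrite (k_c K) (k_pc K) (k_ac K) (k_ad K) (k_bc K) (k_bd K).
Qed.

Lemma K_noapex a b c d x y w : K4S a b c d x y -> w \notin D -> e w x -> e w y -> False.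
Proof.
move=> K wD ewx ewy.
have Kb := K_swab K.
have wa : w != a by apply: contraTneq ewy => ->; rewrite (K_nay K).
have wb : w != b by apply: contraTneq ewx => ->; rewrite (K_nay Kb).
have cD := k_c K; have dD := K_dD K; have xD := k_x K; have yD := K_yD K.
have [] := @keyseq [:: a; b; w] [:: c; d; x; y].
- have := k_anb K; move=> *; dis.
- by rewrite /= (k_a K) (k_b K) wD.
- move=> u v; rewrite !inE => /or3P[]/eqP-> /or3P[]/eqP->; rewrite ?eirr //.
  + exact: (k_ab K).
  + by apply/negP => /(K_na K) /or3P[]/eqP eq; move: wD; rewrite eq ?cD ?dD ?xD.
  + by rewrite esy; exact: (k_ab K).
  + by apply/negP => /(K_na Kb) /or3P[]/eqP eq; move: wD; rewrite eq ?cD ?dD ?yD.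
  + by apply/negP; rewrite esy => /(K_na K) /or3P[]/eqP eq; move: wD; rewrite eq ?cD ?dD ?xD.
  + by apply/negP; rewrite esy => /(K_na Kb) /or3P[]/eqP eq; move: wD; rewrite eq ?cD ?dD ?yD.
- by rewrite /= cD dD xD yD.
- move=> u; rewrite !inE => /or4P[]/eqP->; rewrite ?(k_pc K) ?(K_pd K) ?(k_px K) ?(K_py K) ?eqxx ?orbT //.
- by [].
move=> v [vD]; rewrite !inE !negb_or => /and4P[vc vd vx vy] /=; rewrite !orbF => hv hpv.
have pvD := pD vD.
have nA : forall z, z != c -> z != d -> z != x -> ~~ e a z.
  by move=> z zc zd zx; apply/negP => /(K_na K); rewrite (negbTE zc) (negbTE zd) (negbTE zx).
have nB : forall z, z != c -> z != d -> z != y -> ~~ e b z.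
  by move=> z zc zd zy; apply/negP => /(K_na Kb); rewrite (negbTE zc) (negbTE zd) (negbTE zy).
have pvc : p v != c by apply: p_neq1; rewrite ?(k_pc K).
have pvd : p v != d by rewrite -(k_pc K); apply: p_neq2.
have pvx : p v != x by apply: p_neq1; rewrite ?(k_px K).
have pvy : p v != y by rewrite -(k_px K); apply: p_neq2.
move: hv hpv; rewrite (negbTE (nA _ vc vd vx)) (negbTE (nB _ vc vd vy)).
rewrite (negbTE (nA _ pvc pvd pvx)) (negbTE (nB _ pvc pvd pvy)) /= => ewv ewpv.
apply: (deg4 ewx ewy ewv ewpv).
have := K_xy K; have := pneq vD; move=> *; dis.
Qed.

Hypothesis noadj : forall a b u, a \notin D -> b \notin D -> a != b -> u \in D ->
  e a u -> e a (p u) -> e b u -> e b (p u) -> ~~ e a b.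

Lemma twin_K4S a : twin a -> exists b u x, K4S a b u (p u) x (p x).
Proof.
case/andP => aD /existsP[b /and3P[bD ba /existsP[u /and5P[uD eau eapu ebu ebpu]]]].
have ab : a != b by rewrite eq_sym.
have nab := noadj aD bD ab uD eau eapu ebu ebpu.
have [x [xD eax ebpx xu xpu]] := TS aD bD ab nab uD eau eapu ebu ebpu.
by exists b, u, x; split.
Qed.

Lemma claims_K4S a v : claims a v -> exists b c d, K4S a b c d v (p v).
Proof.
case/and4P => tw eav vD nap.
have [b [u [x K]]] := twin_K4S tw.
case/or3P: (K_na K eav) => /eqP vx.
- by move: nap; rewrite vx (k_ad K).
- by move: nap; rewrite vx ppK ?(k_ac K) ?(k_c K).
- by exists b, u, (p u); rewrite vx.
Qed.


Lemma K_uclaim a b c d x y a' : K4S a b c d x y -> claims a' x -> a' = a.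
Proof.
move=> K cl; have [b' [c' [d' K']]] := claims_K4S cl.
rewrite (k_px K) in K'.
apply/eqP; apply/negPn/negP => a'a.
have Kb := K_swab K; have K'b := K_swab K'.
have a'D := k_a K'.
have b'b : b' != b.
  apply/negP => /eqP eb.
  have := k_bc K'; rewrite eb => /(K_na Kb) /or3P[]/eqP ec'.
  - have := k_ac K'; rewrite ec' esy => /(K_nc K) /or3P[]/eqP ea'.
    + by move: a'D; rewrite ea' (K_dD K).
    + by move: a'a; rewrite ea' eqxx.
    + by move: (k_anb K'); rewrite ea' eb eqxx.
  - have := k_ac K'; rewrite ec' esy => /(K_nc (K_swcd K)) /or3P[]/eqP ea'.
    + by move: a'D; rewrite ea' (k_c K).
    + by move: a'a; rewrite ea' eqxx.
    + by move: (k_anb K'); rewrite ea' eb eqxx.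
  - have := k_pc K'; rewrite ec' (K_py K) => ed'.
    by move: (k_xd K'); rewrite ed' eqxx.
have ab' : a != b' by apply: contraTneq (k_by K') => <-; rewrite (K_nay K).
have ba' : b != a' by apply: contraTneq (k_ax K') => <-; rewrite (K_nay Kb).
apply: (@allnb_false [:: a; b; a'; b'] [:: c; d; x; y; c'; d']).
- have := k_anb K; have := k_anb K'; move=> *; dis.
- by rewrite /= (k_a K) (k_b K) (k_a K') (k_b K').
- by rewrite /= (k_c K) (K_dD K) (k_x K) (K_yD K) (k_c K') (K_dD K').
- move=> u; rewrite !inE => /or4P[| | | /orP[| /orP[|]]] /eqP->;
  by rewrite ?(k_pc K) ?(K_pd K) ?(k_px K) ?(K_py K) ?(k_pc K') ?(K_pd K') ?eqxx ?orbT.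
- by [].
move=> v z; rewrite !inE => /or4P[]/eqP-> ez.
- by move: (K_na K ez) => /or3P[]/eqP->; rewrite ?eqxx ?orbT.
- by move: (K_na Kb ez) => /or3P[]/eqP->; rewrite ?eqxx ?orbT.
- by move: (K_na K' ez) => /or3P[]/eqP->; rewrite ?eqxx ?orbT.
- by move: (K_na K'b ez) => /or3P[]/eqP->; rewrite ?eqxx ?orbT.
Qed.


Lemma A_K4S a b c d x y : K4S a b c d x y -> A a = [set c; d].
Proof.
move=> K; apply/setP => z; rewrite !inE; apply/idP/idP.
- case/andP => zD /andP[eaz eapz].
  case/or3P: (K_na K eaz) => /eqP zc; rewrite zc ?eqxx ?orbT //.
  by move: eapz; rewrite zc (k_px K) (negbTE (K_nay K)).
- case/orP => /eqP->.
  + by rewrite (k_c K) (k_pc K) (k_ac K) (k_ad K).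
  + by rewrite (K_dD K) (K_pd K) (k_ac K) (k_ad K).
Qed.

Lemma key_Ka a b c d x y : K4S a b c d x y -> key a = [set c; d].
Proof. by move=> K; rewrite /key (negbTE (k_a K)) (A_K4S K). Qed.

Lemma key_Kc a b c d x y : K4S a b c d x y -> key c = [set c; d].
Proof.
move=> K; rewrite /key (k_c K); case: pickP => [a' cl | none]; last by rewrite (k_pc K).
exfalso; case/and4P: cl => /andP[a'D _] ea'c _; rewrite (k_pc K) => na'd.
move: ea'c; rewrite esy => /(K_nc K) /or3P[]/eqP ea'.
- by move: a'D; rewrite ea' (K_dD K).
- by move: na'd; rewrite ea' (k_ad K).
- by move: na'd; rewrite ea' (k_bd K).
Qed.

Lemma key_Kx a b c d x y : K4S a b c d x y -> key x = [set c; d].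
Proof.
move=> K; rewrite /key (k_x K); case: pickP => [a' cl | none].
  by rewrite (K_uclaim K cl) (A_K4S K).
by move: (none a); rewrite (K_claims K).
Qed.

Lemma key_K a b c d x y : K4S a b c d x y ->
  forall v, v \in [:: a; b; c; d; x; y] -> key v = [set c; d].
Proof.
move=> K v; rewrite !inE => /or4P[| | | /orP[| /orP[|]]] /eqP->.
- exact: key_Ka K.
- exact: key_Ka (K_swab K).
- exact: key_Kc K.
- by rewrite (key_Kc (K_swcd K)) setUC.
- exact: key_Kx K.
- exact: key_Kx (K_swab K).
Qed.

Lemma keyinv_K a b c d x y : K4S a b c d x y ->
  forall z, key z = [set c; d] -> z \in [:: a; b; c; d; x; y].
Proof.
move=> K z; have Kb := K_swab K.
rewrite /key; case: ifP => zD.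
  case: pickP => [a' cl | none] HK.
    have : c \in A a' by rewrite HK !inE eqxx.
    rewrite inE => /andP[_ /andP[ea'c _]].
    case/and4P: cl => /andP[a'D _] ea'z _ _.
    move: ea'c; rewrite esy => /(K_nc K) /or3P[]/eqP ea'.
    - by move: a'D; rewrite ea' (K_dD K).
    - by move: ea'z; rewrite ea' => /(K_na K) /or3P[]/eqP->; rewrite !inE eqxx ?orbT.
    - by move: ea'z; rewrite ea' => /(K_na Kb) /or3P[]/eqP->; rewrite !inE eqxx ?orbT.
  have : z \in [set c; d] by rewrite -HK !inE eqxx.
  by rewrite !inE => /orP[]/eqP->; rewrite eqxx ?orbT.
move=> HK; have : c \in A z by rewrite HK !inE eqxx.
rewrite inE => /andP[_ /andP[ezc _]].
move: ezc; rewrite esy => /(K_nc K) /or3P[]/eqP ez.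
- by move: zD; rewrite ez (K_dD K).
- by rewrite ez !inE eqxx.
- by rewrite ez !inE eqxx ?orbT.
Qed.

Lemma mk_twin a b u : a \notin D -> b \notin D -> b != a -> u \in D ->
  e a u -> e a (p u) -> e b u -> e b (p u) -> twin a.
Proof.
move=> aD bD ba uD eau eapu ebu ebpu; rewrite /twin aD /=.
apply/existsP; exists b; rewrite bD ba /=; apply/existsP; exists u.
by rewrite uD eau eapu ebu ebpu.
Qed.

Section K3.
Variables w u : T.
Hypotheses (wD : w \notin D) (uD : u \in D) (ewu : e w u) (ewpu : e w (p u)) (ntw : ~~ twin w).

Lemma A3 : A w = [set u; p u].
Proof.
apply/setP => z; rewrite !inE; apply/idP/idP.
- case/andP => zD /andP[ewz ewpz]; apply/negPn/negP; rewrite negb_or => /andP[zu zpu].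
  apply: (deg4 ewu ewpu ewz ewpz).
  have := pneq uD; have := pneq zD; have := p_neq1 uD zD zpu; have := p_neq2 uD zD zu.
  move=> *; dis.
- by case/orP => /eqP->; rewrite ?ppK ?pD ?uD ?ewu ?ewpu.
Qed.

Lemma key3 z : z \in [:: u; p u; w] -> key z = [set u; p u].
Proof.
rewrite !inE => /or3P[]/eqP->.
- rewrite /key uD; case: pickP => [a' cl | none] //.
  have [b [c [d K]]] := claims_K4S cl.
  by case: (K_noapex K wD ewu ewpu).
- rewrite /key pD //; case: pickP => [a' cl | none]; last by rewrite ppK // setUC.
  have [b [c [d K]]] := claims_K4S cl.
  by case: (K_noapex K wD ewpu); rewrite ppK.
- by rewrite /key (negbTE wD) A3.
Qed.

Lemma keyinv3 z : key z = [set u; p u] -> z \in [:: u; p u; w].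
Proof.
rewrite /key; case: ifP => zD.
  case: pickP => [a' cl | none] HK.
    have : u \in A a' by rewrite HK !inE eqxx.
    rewrite inE => /andP[_ /andP[ea'u ea'pu]].
    case/and4P: cl => tw _ _ _; have a'D : a' \notin D by case/andP: tw.
    case: (eqVneq a' w) => [ea'|a'w]; first by move: ntw; rewrite -ea' tw.
    by move: ntw; rewrite (mk_twin wD a'D a'w uD ewu ewpu ea'u ea'pu).
  have : z \in [set u; p u] by rewrite -HK !inE eqxx.
  by rewrite !inE => /orP[]/eqP->; rewrite eqxx ?orbT.
move=> HK; have : u \in A z by rewrite HK !inE eqxx.
rewrite inE => /andP[_ /andP[ezu ezpu]].
case: (eqVneq z w) => [->|zw]; first by rewrite !inE eqxx !orbT.
by move: ntw; rewrite (mk_twin wD (negbT zD) zw uD ewu ewpu ezu ezpu).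
Qed.

End K3.


Section K2.
Variables u : T.
Hypotheses (uD : u \in D) (noap : forall w, w \notin D -> e w u -> e w (p u) -> False)
  (ncl : forall a, ~~ claims a u).

Lemma key2 z : z \in [:: u; p u] -> key z = [set u; p u].
Proof.
rewrite !inE => /orP[]/eqP->.
- by rewrite /key uD; case: pickP => [a' cl | none] //; move: (ncl a'); rewrite cl.
- rewrite /key pD //; case: pickP => [a' cl | none]; last by rewrite ppK // setUC.
  have [b [c [d K]]] := claims_K4S cl.
  by have := K_claims (K_swab K); rewrite ppK // => h; move: (ncl b); rewrite h.
Qed.

Lemma keyinv2 z : key z = [set u; p u] -> z \in [:: u; p u].
Proof.
rewrite /key; case: ifP => zD.
  case: pickP => [a' cl | none] HK.
    have : u \in A a' by rewrite HK !inE eqxx.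
    rewrite inE => /andP[_ /andP[ea'u ea'pu]].
    case/and4P: cl => /andP[a'D _] _ _ _.
    by case: (noap a'D ea'u ea'pu).
  have : z \in [set u; p u] by rewrite -HK !inE eqxx.
  by rewrite !inE.
move=> HK; have : u \in A z by rewrite HK !inE eqxx.
rewrite inE => /andP[_ /andP[ezu ezpu]].
by case: (noap (negbT zD) ezu ezpu).
Qed.

End K2.


Definition h := [rel x y | e x y && (key x == key y)].

Lemma copyK4 a b c d x y : K4S a b c d x y -> forall z, z \in [:: a; b; c; d; x; y] ->
  marked_copy K4s_adj K4s_mark h D [set v | connect h z v].
Proof.
move=> K z zs.
have Kb := K_swab K; have Kcd := K_swcd K.
have cD := k_c K; have dD := K_dD K; have xD := k_x K; have yD := K_yD K.
have aD := k_a K; have bD := k_b K.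
have us : uniq [:: a; b; c; d; x; y].
  have := k_anb K; have := K_cd K; have := k_xc K; have := k_xd K; have := K_yc K; have := K_yd K;
  have := K_xy K; have := neqD aD cD; have := neqD aD dD; have := neqD aD xD; have := neqD aD yD;
  have := neqD bD cD; have := neqD bD dD; have := neqD bD xD; have := neqD bD yD.
  move=> *; dis.
apply: (@block_copy h key D 6 K4s_adj K4s_mark (fun i : 'I_6 => nth a [:: a; b; c; d; x; y] i) [set c; d]) => //.
- exact: inj_nth.
- by move=> i; apply: key_K K _ _; apply: mem_nth; rewrite /= ltn_ord.
- by move=> z' /(keyinv_K K); apply: codom_nth.
- have ecd : e c d by rewrite -(k_pc K) e_p.
  have exy : e x y by rewrite -(k_px K) e_p.
  have E1 := k_ac K; have E2 := k_ad K; have E3 := k_bc K; have E4 := k_bd K.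
  have E5 := k_ax K; have E6 := k_by K.
  have F1 : e c a by rewrite esy. have F2 : e d a by rewrite esy.
  have F3 : e c b by rewrite esy. have F4 : e d b by rewrite esy.
  have F5 : e x a by rewrite esy. have F6 : e y b by rewrite esy.
  have F7 : e d c by rewrite esy. have F8 : e y x by rewrite esy.
  have N1 := negbTE (k_ab K); have N2 := negbTE (K_nay K); have N3 := negbTE (K_nay Kb);
  have N4 := negbTE (K_ncx K); have N5 := negbTE (K_ncy K); have N6 := negbTE (K_ncx Kcd);
  have N7 := negbTE (K_ncy Kcd).
  have M1 : e b a = false by rewrite esy. have M2 : e y a = false by rewrite esy.
  have M3 : e x b = false by rewrite esy. have M4 : e x c = false by rewrite esy.
  have M5 : e y c = false by rewrite esy. have M6 : e x d = false by rewrite esy.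
  have M7 : e y d = false by rewrite esy.
  case=> [[|[|[|[|[|[|i]]]]]] Hi] //; case=> [[|[|[|[|[|[|j]]]]]] Hj] //=;
  by rewrite ?eirr ?ecd ?exy ?E1 ?E2 ?E3 ?E4 ?E5 ?E6 ?F1 ?F2 ?F3 ?F4 ?F5 ?F6 ?F7 ?F8
    ?N1 ?N2 ?N3 ?N4 ?N5 ?N6 ?N7 ?M1 ?M2 ?M3 ?M4 ?M5 ?M6 ?M7.
- case=> [[|[|[|[|[|[|i]]]]]] Hi] //=; by rewrite ?cD ?dD ?xD ?yD ?(negbTE aD) ?(negbTE bD).
- exact: conn_K4s.
- exact: codom_nth.
Qed.


Lemma copyK3 w u : w \notin D -> u \in D -> e w u -> e w (p u) -> ~~ twin w ->
  forall z, z \in [:: u; p u; w] -> marked_copy K3_adj K3_mark h D [set v | connect h z v].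
Proof.
move=> wD uD ewu ewpu ntw z zs.
have puD := pD uD.
have us : uniq [:: u; p u; w].
  have := pneq uD; have := neqD wD uD; have := neqD wD puD; move=> *; dis.
apply: (@block_copy h key D 3 K3_adj K3_mark (fun i : 'I_3 => nth u [:: u; p u; w] i) [set u; p u]) => //.
- exact: inj_nth.
- by move=> i; apply: (key3 wD uD ewu ewpu); apply: mem_nth; rewrite /= ltn_ord.
- by move=> z' /(keyinv3 wD uD ewu ewpu ntw); apply: codom_nth.
- have E1 := e_p uD. have E2 : e (p u) u by rewrite esy.
  have E3 : e u w by rewrite esy. have E4 : e (p u) w by rewrite esy.
  case=> [[|[|[|i]]] Hi] //; case=> [[|[|[|j]]] Hj] //=;
  by rewrite ?eirr ?E1 ?E2 ?E3 ?E4 ?ewu ?ewpu.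
- case=> [[|[|[|i]]] Hi] //=; by rewrite ?uD ?puD ?(negbTE wD).
- exact: conn_K3.
- exact: codom_nth.
Qed.

Lemma copyK2 u : u \in D -> (forall w, w \notin D -> e w u -> e w (p u) -> False) ->
  (forall a, ~~ claims a u) ->
  forall z, z \in [:: u; p u] -> marked_copy K2_adj K2_mark h D [set v | connect h z v].
Proof.
move=> uD noap ncl z zs.
have puD := pD uD.
have us : uniq [:: u; p u] by have := pneq uD; move=> *; dis.
apply: (@block_copy h key D 2 K2_adj K2_mark (fun i : 'I_2 => nth u [:: u; p u] i) [set u; p u]) => //.
- exact: inj_nth.
- by move=> i; apply: (key2 uD ncl); apply: mem_nth; rewrite /= ltn_ord.
- by move=> z' /(keyinv2 noap); apply: codom_nth.
- have E1 := e_p uD. have E2 : e (p u) u by rewrite esy.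
  case=> [[|[|i]] Hi] //; case=> [[|[|j]] Hj] //=; by rewrite ?eirr ?E1 ?E2.
- case=> [[|[|i]] Hi] //=; by rewrite ?uD ?puD.
- exact: conn_K2.
- exact: codom_nth.
Qed.


Lemma classifyD x : x \in D -> exists n (adj : rel 'I_n) (mk : pred 'I_n) (s : seq T) Kset,
  [/\ x \in s, p x \in s, (forall z, z \in s -> key z = Kset) &
   [\/ marked_copy K2_adj K2_mark h D [set y | connect h x y],
       marked_copy K3_adj K3_mark h D [set y | connect h x y]
     | marked_copy K4s_adj K4s_mark h D [set y | connect h x y]]].
Proof.
move=> xD.
case: (boolP [exists a, claims a x]) => [/existsP[a cl] | /existsPn ncl].
  have [b [c [d K]]] := claims_K4S cl.
  have xs : x \in [:: a; b; c; d; x; p x] by rewrite !inE eqxx !orbT.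
  exists 6, K4s_adj, K4s_mark, [:: a; b; c; d; x; p x], [set c; d]; split => //.
  - by rewrite !inE eqxx !orbT.
  - exact: key_K K.
  - by constructor 3; apply: copyK4 K _ xs.
case: (boolP [exists w, [&& w \notin D, e w x & e w (p x)]]) => [/existsP[w /and3P[wD ewx ewpx]] | /existsPn noap].
  case: (boolP (twin w)) => tw.
    have [b [u [x' K]]] := twin_K4S tw.
    have xs : x \in [:: w; b; u; p u; x'; p x'].
      by case/or3P: (K_na K ewx) => /eqP->; rewrite !inE eqxx ?orbT.
    exists 6, K4s_adj, K4s_mark, [:: w; b; u; p u; x'; p x'], [set u; p u]; split => //.
    - case/or3P: (K_na K ewx) => /eqP->; rewrite ?ppK ?(k_c K) ?(k_x K) // !inE eqxx ?orbT //.
    - exact: key_K K.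
    - by constructor 3; apply: copyK4 K _ xs.
  have xs : x \in [:: x; p x; w] by rewrite !inE eqxx.
  exists 3, K3_adj, K3_mark, [:: x; p x; w], [set x; p x]; split => //.
  - by rewrite !inE eqxx orbT.
  - exact: (key3 wD xD ewx ewpx).
  - by constructor 2; apply: copyK3 wD xD ewx ewpx tw _ xs.
have noap' : forall w, w \notin D -> e w x -> e w (p x) -> False.
  by move=> w wD ewx ewpx; move: (noap w); rewrite wD ewx ewpx.
have xs : x \in [:: x; p x] by rewrite !inE eqxx.
exists 2, K2_adj, K2_mark, [:: x; p x], [set x; p x]; split => //.
- by rewrite !inE eqxx orbT.
- exact: (key2 xD ncl).
- by constructor 1; apply: copyK2 xD noap' ncl _ xs.
Qed.

Lemma built : built_from_copies e.
Proof.
exists h, D; split.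
- by move=> x y; rewrite /h /= esy eq_sym.
- by move=> x y /andP[].
- move=> x /=; case: (boolP (x \in D)) => xD.
    by have [n [adj [mk [s [Kset [_ _ _ H]]]]]] := classifyD xD.
  have [u [uD exu expu]] := apex_ex xD.
  case: (boolP (twin x)) => tw.
    have [b [u' [x' K]]] := twin_K4S tw.
    by constructor 3; apply: copyK4 K _ _; rewrite !inE eqxx.
  by constructor 2; apply: copyK3 xD uD exu expu tw _ _; rewrite !inE eqxx !orbT.
- move=> x y exy nh; apply/negP => /andP[xD yD].
  have pxy := p_eq xD yD exy.
  have [n [adj [mk [s [Kset [xs pxs hk _]]]]]] := classifyD xD.
  by move: nh; rewrite /h /= exy (hk _ xs) -pxy (hk _ pxs) eqxx.
Qed.


Lemma K4case a b u : a \notin D -> b \notin D -> a != b -> u \in D ->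
  e a u -> e a (p u) -> e b u -> e b (p u) -> e a b -> (forall x y, connect e x y) -> isK4 e.
Proof.
move=> aD bD ab uD eau eapu ebu ebpu eab conn.
have puD := pD uD; have eupu := e_p uD.
have F1 : e u a by rewrite esy. have F2 : e (p u) a by rewrite esy.
have F3 : e u b by rewrite esy. have F4 : e (p u) b by rewrite esy.
have F5 : e b a by rewrite esy. have F6 : e (p u) u by rewrite esy.
have upu := pneq uD.
have au := neqD aD uD; have apu := neqD aD puD; have bu := neqD bD uD; have bpu := neqD bD puD.
have uQ : uniq [:: a; b; u; p u] by dis.
have nbQ : forall z y, z \in [:: a; b; u; p u] -> e z y -> y \in [:: a; b; u; p u].
  move=> z y; rewrite !inE => /or4P[]/eqP-> ey.
  - by case/or3P: (@nb3 a u (p u) b y eau eapu eab ltac:(dis) ey) => /eqP->; rewrite eqxx ?orbT.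
  - by case/or3P: (@nb3 b u (p u) a y ebu ebpu F5 ltac:(dis) ey) => /eqP->; rewrite eqxx ?orbT.
  - by case/or3P: (@nb3 u (p u) a b y eupu F1 F3 ltac:(dis) ey) => /eqP->; rewrite eqxx ?orbT.
  - by case/or3P: (@nb3 (p u) u a b y F6 F2 F4 ltac:(dis) ey) => /eqP->; rewrite eqxx ?orbT.
have allQ : forall y, y \in [:: a; b; u; p u].
  move=> y; have cl : closed e (mem [:: a; b; u; p u]).
    by apply: (intro_closed (sym_connect_sym esy)) => x z exz xQ; apply: nbQ xQ exz.
  by rewrite -(closed_connect cl (conn a y)) !inE eqxx.
exists (fun i : 'I_4 => nth a [:: a; b; u; p u] i); split.
  exists (fun y => inord (index y [:: a; b; u; p u]) : 'I_4).
    move=> i; apply: ord_inj; rewrite inordK index_uniq ?ltn_ord // -[4]/(size [:: a; b; u; p u]) index_mem mem_nth // ltn_ord.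
  move=> y; have yQ := allQ y; rewrite inordK ?nth_index //; move: yQ; by rewrite -index_mem.
case=> [[|[|[|[|i]]]] Hi] //; case=> [[|[|[|[|j]]]] Hj] //=;
by rewrite ?eirr ?eau ?eapu ?ebu ?ebpu ?eab ?eupu ?F1 ?F2 ?F3 ?F4 ?F5 ?F6.
Qed.

End Dsec.


Lemma diss_le : diss e <= 2 * alpha e.
Proof.
have [D hD <-] := diss_attained.
have := @keylemma D hD set0 set0.
move=> /(_ _ _ _ _ _) H; have {H} : 2 * #|@set0 T| + #|D| + 0 <= #|@set0 T| + 2 * alpha e.
  apply: leq_trans (H _ _ _ _ _); first by rewrite leq_add2l leq0n.
  - by apply/indepP => x y; rewrite inE.
  - by rewrite -setI_eq0 set0I.
  - exact: sub0set.
  - by move=> v; rewrite inE.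
  - by move=> v _ _ /existsP[x]; rewrite inE.
by rewrite cards0; lia.
Qed.

Lemma K4_ge : isK4 e -> 2 * alpha e <= diss e.
Proof.
case=> phi [[g phig gphi] hphi].
have phiinj : injective phi := can_inj phig.
have a1 : alpha e <= 1.
  have [I iI <-] := alpha_attained.
  apply/card_le1_eqP => x y xI yI.
  rewrite -(gphi x) -(gphi y); congr phi; apply/eqP; apply/negPn/negP => gxy.
  by move/indepP: iI => /(_ x y xI yI); rewrite -{1}(gphi x) -{1}(gphi y) hphi eq_sym gxy.
set D := [set phi ord0; phi (lift ord0 ord0)].
have d01 : phi ord0 != phi (lift ord0 ord0) by rewrite (inj_eq phiinj).
have dD : dissociation e D.
  apply/forall_inP => x xD; apply/card_le1_eqP => y z; rewrite !inE => /andP[yD exy] /andP[zD exz].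
  have xy : x != y by apply: contraTneq exy => ->; rewrite eirr.
  have xz : x != z by apply: contraTneq exz => ->; rewrite eirr.
  move: xD yD zD xy xz; rewrite !inE.
  by do 3!case/orP=> /eqP->; rewrite ?eqxx.
have := diss_ge dD; rewrite cards2 d01 /=; lia.
Qed.

Lemma copy_dissK (n : nat) (adj : rel 'I_n) (mk : pred 'I_n) (h : rel T) (M C : {set T}) :
  (forall i j k, mk i -> adj i j -> mk j -> adj i k -> mk k -> j = k) ->
  marked_copy adj mk h M C -> forall x y z, x \in C -> y \in C -> z \in C ->
  x \in M -> y \in M -> z \in M -> h x y -> h x z -> y = z.
Proof.
move=> Hf [phi [inj -> hh hm]] x y z /imsetP[i _ ->] /imsetP[j _ ->] /imsetP[k _ ->].
rewrite !hm !hh => mi mj mk' aij aik; congr phi; exact: Hf mi aij mj aik mk'.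
Qed.

Lemma copy_bound12 (n : nat) (adj : rel 'I_n) (mk : pred 'I_n) (h : rel T) (M I C : {set T}) (i0 i1 : 'I_n) :
  (forall i j, adj i j = (i != j)) -> (forall x y, h x y -> e x y) -> i0 != i1 -> mk i0 -> mk i1 ->
  independent e I ->
  marked_copy adj mk h M C -> 2 * #|I :&: C| <= #|M :&: C|.
Proof.
move=> hadj hsub i01 m0 m1 iI [phi [inj eC hh hm]].
have c1 : #|I :&: C| <= 1.
  apply/card_le1_eqP => x y; rewrite !inE eC => /andP[xI /imsetP[i _ ex]] /andP[yI /imsetP[j _ ey]].
  subst x y; congr phi; apply/eqP; apply/negPn/negP => ij.
  have E : e (phi i) (phi j) by apply: hsub; rewrite hh hadj; move: ij; rewrite eq_sym.
  by move/indepP: iI => /(_ _ _ xI yI); rewrite E.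
have c2 : 1 < #|M :&: C|.
  apply/card_gt1P; exists (phi i0), (phi i1); rewrite !inE eC !hm m0 m1 (inj_eq inj) i01.
  by split => //; apply/imsetP; eexists.
lia.
Qed.

Lemma copy_bound4 (h : rel T) (M I C : {set T}) :
  (forall x y, h x y -> e x y) -> independent e I ->
  marked_copy K4s_adj K4s_mark h M C -> 2 * #|I :&: C| <= #|M :&: C|.
Proof.
move=> hsub iI [phi [inj eC hh hm]].
have c1 : #|I :&: C| <= 2.
  rewrite leqNgt; apply/negP => /card_gt2P [x [y [z [[]]]]].
  rewrite !inE eC => /andP[xI /imsetP[i _ ex]] /andP[yI /imsetP[j _ ey]] /andP[zI /imsetP[k _ ez]].
  subst x y z; rewrite !(inj_eq inj) => -[ij jk ki].
  have := @t2 i j k ij jk; rewrite eq_sym ki => /(_ isT).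
  have nij := (elimT (indepP _) iI) _ _ xI yI; have njk := (elimT (indepP _) iI) _ _ yI zI.
  have nik := (elimT (indepP _) iI) _ _ xI zI.
  case/orP => [/orP[]|] H.
  - by move: nij; rewrite hsub // hh.
  - by move: njk; rewrite hsub // hh.
  - by move: nik; rewrite hsub // hh.
have c2 : 4 <= #|M :&: C|.
  have sub : [seq phi i | i <- [:: @Ordinal 6 2 isT; @Ordinal 6 3 isT; @Ordinal 6 4 isT; @Ordinal 6 5 isT]]
     \subset M :&: C.
    apply/subsetP => x /mapP[i]; rewrite !inE => ii ->; rewrite eC hm.
    rewrite (_ : phi i \in _ = true); last by apply/imsetP; eexists.
    by case/or4P: ii => /eqP->.
  have := subset_leq_card sub; rewrite (card_uniqP _) // map_inj_uniq //.
lia.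
Qed.


Lemma built_ge : built_from_copies e -> 2 * alpha e <= diss e.
Proof.
case=> h [M [hsym hsub hcomp hadd]].
have csym := sym_connect_sym hsym.
have dM : dissociation e M.
  apply/forall_inP => x xM; apply/card_le1_eqP => y z; rewrite !inE => /andP[yM exy] /andP[zM exz].
  have hxy : h x y by apply/negPn/negP => nh; move: (hadd x y exy nh); rewrite xM yM.
  have hxz : h x z by apply/negPn/negP => nh; move: (hadd x z exz nh); rewrite xM zM.
  have xC : x \in [set v | connect h x v] by rewrite inE connect0.
  have yC : y \in [set v | connect h x v] by rewrite inE connect1.
  have zC : z \in [set v | connect h x v] by rewrite inE connect1.
  case: (hcomp x) => Hc.
  - have := copy_dissK f2 Hc xC yC zC xM yM zM hxy hxz; by move=> ->.
  - have := copy_dissK f3 Hc xC yC zC xM yM zM hxy hxz; by move=> ->.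
  - have := copy_dissK t3 Hc xC yC zC xM yM zM hxy hxz; by move=> ->.
have [I iI <-] := alpha_attained.
have part : forall A : {set T}, #|A| = \sum_(r | root h r == r) #|A :&: [set v | connect h r v]|.
  move=> A; rewrite -sum1_card (partition_big (root h) (fun r => root h r == r)) /=; last first.
    by move=> i _; rewrite root_root.
  apply: eq_bigr => r /eqP rr; rewrite -sum1_card; apply: eq_bigl => x; rewrite !inE.
  by rewrite -{1}rr root_connect // csym.
have : 2 * #|I| <= #|M|.
  rewrite (part I) (part M) big_distrr /=; apply: leq_sum => r _.
  case: (hcomp r) => Hc.
  - by apply: (@copy_bound12 2 K2_adj K2_mark h M I _ (@Ordinal 2 0 isT) (@Ordinal 2 1 isT)).
  - by apply: (@copy_bound12 3 K3_adj K3_mark h M I _ (@Ordinal 3 0 isT) (@Ordinal 3 1 isT)).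
  - exact: copy_bound4 hsub iI Hc.
by have := diss_ge dM; lia.
Qed.

Lemma easy_dir : classG e -> 2 * alpha e = diss e.
Proof.
move=> H; apply/eqP; rewrite eqn_leq diss_le andbT.
by case: H; [apply: K4_ge | apply: built_ge].
Qed.

Lemma hard_dir : (forall x y, connect e x y) -> 2 * alpha e = diss e -> classG e.
Proof.
move=> conn H.
have [D hD cD] := diss_attained.
have hDsz : 2 * alpha e <= #|D| by rewrite cD H.
case: (boolP [exists a, exists b, exists u, [&& a \notin D, b \notin D, a != b, u \in D &
   [&& e a u, e a (p D u), e b u, e b (p D u) & e a b]]]).
  case/existsP => a /existsP[b /existsP[u /and5P[aD bD ab uD /and5P[? ? ? ? ?]]]].
  by left; apply: (K4case hD hDsz aD bD ab uD).
move/existsPn => none; right; apply: (built hD hDsz).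
move=> a b u aD bD ab uD eau eapu ebu ebpu; apply/negP => eab.
by move: (none a) => /existsPn /(_ b) /existsPn /(_ u); rewrite aD bD ab uD eau eapu ebu ebpu eab.
Qed.

End Main.

Theorem theorem3 (T : finType) (e : rel T) :
  simple_graph e -> connected_graph e -> subcubic e ->
  (2 * alpha e = diss e <-> classG e).
Proof.
move=> [esy eirr] [_ conn] ecub; split.
- exact: hard_dir.
- exact: easy_dir.
Qed.
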